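(* Let $\Gamma$ be a connected rooted Eisenbud–Neumann diagram satisfying: (a) all near weights are positive and no far weight is zero; (b) if the far weight at a node $v$ is negative then the far weights at all nodes beyond $v$ are negative; (c) all vertex multiplicities are positive. If $\Gamma$ has $\nu\ge2$ arrowheads $L_1,\dots,L_\nu$, then $\mathrm{lk}(L_i,L_i)<0$ for every $i$.
   Context: A rooted Eisenbud–Neumann (splice) diagram is a finite tree with a distinguished root vertex, whose vertices are nodes, leaves (valency one, not arrowheads) and arrowhead vertices $L_1,\dots,L_\nu$ carrying multiplicities $n_1,\dots,n_\nu$; at each node every incident edge carries a weight at that node (omitted weights equal $1$). At a node $v$, the weight on the edge leading from $v$ towards the root is the far weight at $v$; the weights at $v$ on the other incident edges are near weights at $v$. A node $w$ is beyond a node $v$ if the geodesic from $w$ to the root contains $v$. For distinct vertices $v,w$ (nodes or arrowheads), $\mathrm{lk}(v,w)$ is the product of all edge weights adjacent to but not on the geodesic between $v$ and $w$. The multiplicity of a non-arrowhead vertex $v$ is $M_v=\sum_j n_j\,\mathrm{lk}(v,L_j)$; the multiplicity of $L_j$ is $n_j$. The self-linking $\mathrm{lk}(L_i,L_i)$ is defined by $n_i\,\mathrm{lk}(L_i,L_i)=-\sum_{j\ne i}n_j\,\mathrm{lk}(L_i,L_j)$. *)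

(* Defs.v *)
From HB Require Import structures.
From mathcomp Require Import all_boot all_order all_algebra.
Set Implicit Arguments. Unset Strict Implicit. Unset Printing Implicit Defensive.
Import Order.TTheory GRing.Theory Num.Theory.

(* A rooted tree on a finite vertex type V is given by a root r and a parent
   map par with par r = r such that iterating par from any vertex reaches r
   (this forces the graph with edges {x, par x}, x <> r, to be a tree,
   automatically connected). *)
Definition rooted_tree (V : finType) (par : V -> V) (r : V) : Prop :=
  par r = r /\ forall v : V, exists k : nat, iter k par v = r.

Definition adj (V : finType) (par : V -> V) (x y : V) : bool :=
  (x != y) && ((par x == y) || (par y == x)).

Definition valency (V : finType) (par : V -> V) (x : V) : nat :=
  #|[set y | adj par x y]|.

(* ancestors of v: the vertices on the geodesic from v to the root
   (including v itself).  "w is beyond v" iff v \in anc par w. *)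
Definition anc (V : finType) (par : V -> V) (v : V) : {set V} :=
  [set x | [exists k : 'I_#|V|, iter k par v == x]].

Definition is_node (V : finType) (par : V -> V) (arr : {set V}) (x : V) : bool :=
  (x \notin arr) && (valency par x != 1%N).

(* the edge {x,y} lies on the geodesic between v and w: its child endpoint c
   (the one farther from the root) is an ancestor of exactly one of v, w *)
Definition geo_edge (V : finType) (par : V -> V) (v w x y : V) : bool :=
  adj par x y &&
  (let c := if par x == y then x else y in (c \in anc par v) != (c \in anc par w)).

Definition geo_vert (V : finType) (par : V -> V) (v w x : V) : bool :=
  [|| x == v, x == w | [exists y, geo_edge par v w x y]].

(* wt x y = the weight at node x on the edge {x,y} *)
Definition lk (V : finType) (par : V -> V) (arr : {set V}) (wt : V -> V -> int)
    (v w : V) : int :=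
  \prod_(x | is_node par arr x && geo_vert par v w x)
     \prod_(y | adj par x y && ~~ geo_edge par v w x y) wt x y.

(* multiplicity of a non-arrowhead vertex v; mult j = n_j for arrowheads j *)
Definition vmult (V : finType) (par : V -> V) (arr : {set V}) (wt : V -> V -> int)
    (mult : V -> int) (v : V) : int :=
  \sum_(j in arr) mult j * lk par arr wt v j.

(* self-linking of an arrowhead i, defined by
   n_i lk(L_i,L_i) = - sum_{j <> i} n_j lk(L_i,L_j) *)
Definition selflk (V : finType) (par : V -> V) (arr : {set V}) (wt : V -> V -> int)
    (mult : V -> int) (i : V) : rat :=
  - ((\sum_(j in arr | j != i) mult j * lk par arr wt i j)%:~R) / (mult i)%:~R.

(* Main.v *)
Require Import Defs.
From HB Require Import structures.
From mathcomp Require Import all_boot all_order all_algebra.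
Import Order.TTheory GRing.Theory Num.Theory.
Set Implicit Arguments. Unset Strict Implicit.

Lemma iter_root (V : Type) (par : V -> V) r k : par r = r -> iter k par r = r.
Proof. by move=> Hr; elim: k => //= k ->. Qed.

Lemma iter_small (V : finType) (par : V -> V) r (Ht : rooted_tree par r) v k :
  exists2 k', k' < #|V| & iter k' par v = iter k par v.
Proof.
case: Ht => Hr Hreach.
have ex : exists K, iter K par v == r by case: (Hreach v) => K HK; exists K; apply/eqP.
case: (ex_minnP ex) => K /eqP HK Kmin.
have KV : K < #|V|.
  pose f := fun (t : 'I_K.+1) => iter t par v.
  have finj : injective f.
    have key : forall a b : 'I_K.+1, a < b -> f a = f b -> False.
      move=> a b ab E.
      have bK : b <= K by rewrite -ltnS.
      have : K <= (K - b) + a.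
        apply: Kmin; apply/eqP; rewrite iterD -/(f a) E /f -iterD subnK //.
      have lt : (K - b) + a < K.
        by rewrite -(ltn_add2r b) -addnA (addnC a) addnA subnK // ltn_add2l.
      by move=> H; move: (leq_trans lt H); rewrite ltnn.
    move=> a b E; apply/val_inj => /=.
    case: (ltngtP a b) => // ab; [case: (key _ _ ab E) | case: (key _ _ ab (esym E))].
  by have := @leq_card _ V f finj; rewrite card_ord.
case: (leqP k K) => kK.
  by exists k => //; apply: leq_ltn_trans KV.
exists K => //; rewrite -(subnK (ltnW kK)) iterD HK iter_root //.
Qed.

Lemma ancP (V : finType) (par : V -> V) r (Ht : rooted_tree par r) v x :
  reflect (exists k, iter k par v = x) (x \in anc par v).
Proof.
rewrite inE; apply: (iffP existsP) => [[k /eqP H]|[k H]]; first by exists k.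
have [k' Hk' E] := iter_small Ht v k.
by exists (Ordinal Hk'); apply/eqP; rewrite /= E H.
Qed.

Lemma anc_self (V : finType) (par : V -> V) r (Ht : rooted_tree par r) v : v \in anc par v.
Proof. by apply/(ancP Ht); exists 0. Qed.

Lemma anc_par (V : finType) (par : V -> V) r (Ht : rooted_tree par r) v y :
  y \in anc par v -> par y \in anc par v.
Proof. by move/(ancP Ht) => [k Hk]; apply/(ancP Ht); exists k.+1; rewrite /= Hk. Qed.

Lemma anc_root (V : finType) (par : V -> V) r (Ht : rooted_tree par r) x :
  x \in anc par r -> x = r.
Proof. by move/(ancP Ht) => [k <-]; rewrite iter_root //; case: Ht. Qed.

Lemma anc_step (V : finType) (par : V -> V) r (Ht : rooted_tree par r) i x :
  x \in anc par i -> x = i \/ x \in anc par (par i).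
Proof.
move/(ancP Ht) => [[|k] Hk]; first by left.
by right; apply/(ancP Ht); exists k; rewrite -iterSr.
Qed.

Lemma anc_up (V : finType) (par : V -> V) r (Ht : rooted_tree par r) i x :
  x \in anc par (par i) -> x \in anc par i.
Proof. by move/(ancP Ht) => [k Hk]; apply/(ancP Ht); exists k.+1; rewrite iterSr. Qed.

Lemma no_cycle (V : finType) (par : V -> V) r (Ht : rooted_tree par r) i :
  i != r -> i \notin anc par (par i).
Proof.
move=> ir; apply/negP => /(ancP Ht) [k Hk].
have Hk1 : iter k.+1 par i = i by rewrite iterSr.
have Hm : forall m, iter (m * k.+1) par i = i.
  by elim=> [|m IH] //; rewrite mulSn iterD IH Hk1.
case: Ht => Hr Hreach; case: (Hreach i) => K HK.
have KK : K <= K * k.+1 by rewrite leq_pmulr.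
move: (Hm K); rewrite -(subnK KK) iterD HK iter_root // => E.
by move: ir; rewrite E eqxx.
Qed.

Lemma adjC (V : finType) (par : V -> V) x y : adj par x y = adj par y x.
Proof. by rewrite /adj eq_sym orbC. Qed.

Lemma val2 (V : finType) (par : V -> V) x a b :
  adj par x a -> adj par x b -> a != b -> 1 < valency par x.
Proof.
move=> ha hb ab; rewrite /valency.
apply: leq_trans (_ : #|[set a; b]| <= _); first by rewrite cards2 ab.
by apply subset_leq_card; apply/subsetP => z; rewrite !inE => /orP[]/eqP->.
Qed.

Lemma node_notarr (V : finType) (par : V -> V) arr x j :
  is_node par arr x -> j \in arr -> x != j.
Proof. by move=> /andP[xa _] ja; apply/eqP => E; move: xa; rewrite E ja. Qed.

Lemma lk_pos (V : finType) (par : V -> V) r (arr : {set V}) (wt : V -> V -> int)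
  (Ht : rooted_tree par r)
  (Hnear : forall v y, is_node par arr v -> adj par v y -> y != par v -> (0 < wt v y)%R)
  i j (Hi : i \in arr) (Hj : j \in arr)
  (Hpos : forall x, is_node par arr x -> x != r -> x \in anc par i -> (0 < wt x (par x))%R) :
  (0 < lk par arr wt i j)%R.
Proof.
rewrite /lk; apply: prodr_gt0 => x /andP[xn xg].
apply: prodr_gt0 => y /andP[axy ng].
have [ey | ney] := eqVneq y (par x); last exact: Hnear.
subst y.
have xr : x != r.
  by apply/eqP => exr; move: axy; rewrite /adj exr; case: Ht => -> _; rewrite eqxx.
apply: Hpos => //.
move: ng; rewrite /geo_edge /= axy /=.
have -> : (par x == par x) = true by apply/eqP.
rewrite negbK => /eqP Eanc.
have xi := node_notarr xn Hi; have xj := node_notarr xn Hj.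
move: xg; rewrite /geo_vert (negbTE xi) (negbTE xj) /= => /existsP[y' /andP[axy']].
case: eqP => [_ | npy] /= H; first by move: H; rewrite Eanc; case: (x \in anc par j).
have py' : par y' = x.
  by move: axy'; rewrite /adj => /andP[_ /orP[/eqP E|/eqP //]]; case: npy.
have : (y' \in anc par i) || (y' \in anc par j).
  by move: H; case: (y' \in anc par i); case: (y' \in anc par j).
by case/orP => /(anc_par Ht); rewrite py' // Eanc.
Qed.

Lemma par_neq (V : finType) (par : V -> V) r (Ht : rooted_tree par r) i :
  i != r -> par i != i.
Proof.
move=> ir; apply/eqP => E; move: (no_cycle Ht ir); rewrite E.
by rewrite (anc_self Ht).
Qed.

Lemma adj_par (V : finType) (par : V -> V) r (Ht : rooted_tree par r) i :
  i != r -> adj par i (par i).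
Proof. by move=> ir; rewrite /adj eq_sym (par_neq Ht ir) eqxx. Qed.

Lemma nb (V : finType) (par : V -> V) r (Ht : rooted_tree par r) i y :
  i != r -> valency par i = 1%N -> adj par i y -> y = par i.
Proof.
move=> ir vi aiy; apply/eqP; apply/negPn/negP => ne.
by move: (val2 aiy (adj_par Ht ir) ne); rewrite vi.
Qed.

Lemma ancI (V : finType) (par : V -> V) r (Ht : rooted_tree par r) i c :
  (c \in anc par i) = (c == i) || (c \in anc par (par i)).
Proof.
apply/idP/idP.
  by case/(anc_step Ht) => [->|->]; rewrite ?eqxx ?orbT.
by case/orP => [/eqP->|/(anc_up Ht)]; first exact: anc_self Ht _.
Qed.

Lemma i_notin (V : finType) (par : V -> V) r (Ht : rooted_tree par r) i j :
  i != r -> valency par i = 1%N -> j != i -> i \notin anc par j.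
Proof.
move=> ir vi ji; apply/negP => /(ancP Ht) [[|k] Hk]; first by move: ji; rewrite -Hk eqxx.
set c := iter k par j.
have pc : par c = i by rewrite -Hk.
have ci : c != i by apply/eqP => E; move: (par_neq Ht ir); rewrite -{1}E pc eqxx.
have aic : adj par i c by rewrite /adj eq_sym ci pc eqxx orbT.
have cv := nb Ht ir vi aic.
move: (no_cycle Ht ir); rewrite -cv; apply/negP/negPn/(ancP Ht); exists 1%N.
by rewrite /= pc.
Qed.

Lemma geo_edge_step (V : finType) (par : V -> V) r (Ht : rooted_tree par r) i j x y :
  x != i -> y != i -> geo_edge par i j x y = geo_edge par (par i) j x y.
Proof.
move=> xi yi; rewrite /geo_edge /=; congr (_ && _).
have ci : (if par x == y then x else y) != i by case: ifP.
by rewrite (ancI Ht i) (negbTE ci).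
Qed.

Lemma pv_ne (V : finType) (par : V -> V) r (Ht : rooted_tree par r) i :
  i != r -> par (par i) != i.
Proof.
move=> ir; apply/eqP => E; move: (no_cycle Ht ir); apply/negP/negPn/(ancP Ht).
by exists 1%N.
Qed.

Lemma lk_step (V : finType) (par : V -> V) r (arr : {set V}) (wt : V -> V -> int)
  (Ht : rooted_tree par r) i j (Hi : i \in arr) (ir : i != r)
  (vi : valency par i = 1%N) (ji : j != i) (vn : is_node par arr (par i)) :
  lk par arr wt (par i) j = (wt (par i) i * lk par arr wt i j)%R.
Proof.
set v := par i.
have avi : adj par v i by rewrite adjC (adj_par Ht ir).
have vii : v != i by apply: (par_neq Ht ir).
have pvi : (par v == i) = false by apply/negbTE/(pv_ne Ht ir).
have Ei : geo_edge par i j v i.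
  rewrite /geo_edge /= avi pvi (anc_self Ht) /=.
  by rewrite (negbTE (i_notin Ht ir vi ji)).
have Ev : geo_edge par v j v i = false.
  rewrite /geo_edge /= avi pvi /=.
  by rewrite (negbTE (no_cycle Ht ir)) (negbTE (i_notin Ht ir vi ji)).
have Hxy : forall x y, x != i -> x != v -> geo_edge par i j x y = geo_edge par v j x y.
  move=> x y xi xv; have [->|yi] := eqVneq y i; last exact: (geo_edge_step Ht).
  rewrite /geo_edge; have -> : adj par x i = false.
    by apply/negP; rewrite adjC => /(nb Ht ir vi) E; move: xv; rewrite E eqxx.
  by [].
have Gv : forall x, is_node par arr x -> geo_vert par v j x = geo_vert par i j x.
  move=> x xn; have xi := node_notarr xn Hi.
  have [->|xv] := eqVneq x v.
    by rewrite /geo_vert eqxx /=; symmetry; apply/orP; right; apply/orP; right;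
       apply/existsP; exists i.
  rewrite /geo_vert (negbTE xi) (negbTE xv) /=; congr (_ || _).
  by apply: eq_existsb => y; rewrite Hxy.
rewrite /lk.
rewrite (bigD1 v) /=; last by rewrite vn /geo_vert eqxx.
rewrite [in RHS](bigD1 v) /=; last by rewrite vn -(Gv v vn) /geo_vert eqxx.
rewrite (bigD1 i) /=; last by rewrite avi Ev.
rewrite !mulrA; congr (_ * _ * _)%R.
  apply: eq_bigl => y; have [->|yi] := eqVneq y i; first by rewrite Ei /= !andbF.
  by rewrite andbT (geo_edge_step Ht j vii yi).
apply: eq_big => x.
  by case xn: (is_node par arr x) => //=; rewrite Gv.
move=> /andP[/andP[xn _] xv]; apply: eq_bigl => y.
by rewrite Hxy // (node_notarr xn Hi).
Qed.

Lemma lk_neg (V : finType) (par : V -> V) r (arr : {set V}) (wt : V -> V -> int)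
  (Ht : rooted_tree par r)
  (Hnear : forall v y, is_node par arr v -> adj par v y -> y != par v -> (0 < wt v y)%R)
  i (Hi : i \in arr) (ir : i != r)
  (vi : valency par i = 1%N) (vn : is_node par arr (par i)) (vr : par i != r)
  (wneg : (wt (par i) (par (par i)) < 0)%R) :
  (lk par arr wt (par i) i < 0)%R.
Proof.
set v := par i.
have ancIv : forall c, (c \in anc par v) != (c \in anc par i) = (c == i).
  move=> c; rewrite (ancI Ht i c) -/v.
  have [->|ci] := eqVneq c i; first by rewrite (negbTE (no_cycle Ht ir)).
  by case: (c \in anc par v).
rewrite /lk (bigD1 v) /=; last by rewrite vn /geo_vert eqxx.
rewrite mulrC big1 ?mul1r; last first.
  move=> x /andP[/andP[xn xg] xv]; exfalso.
  have xi := node_notarr xn Hi.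
  move: xg; rewrite /geo_vert (negbTE xi) (negbTE xv) /= => /existsP[y /andP[axy]].
  case: ifP => [_|pxy] /=; rewrite ancIv => /eqP E; first by move: xi; rewrite E eqxx.
  move: axy; rewrite /adj pxy E /= => /andP[_ /eqP pix].
  by move: xv; rewrite -pix eqxx.
have vpv : adj par v (par v) by apply: (adj_par Ht vr).
rewrite (bigD1 (par v)) /=; last first.
  rewrite vpv /geo_edge /= vpv.
  have -> : (par v == par v) = true by apply/eqP.
  by rewrite ancIv (negbTE (par_neq Ht ir)).
rewrite -/v in wneg.
rewrite mulrC pmulr_rlt0 //.
apply: prodr_gt0 => y /andP[/andP[avy _] yp]; exact: Hnear.
Qed.

Unset Implicit Arguments.
Set Strict Implicit.

Theorem lemma3p16 (V : finType) (par : V -> V) (r : V) (arr : {set V})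
    (wt : V -> V -> int) (mult : V -> int)
    (Htree : rooted_tree par r)
    (Harr_val : forall j, j \in arr -> valency par j = 1%N)
    (* (a) near weights positive, far weights nonzero *)
    (Hnear : forall v y, is_node par arr v -> adj par v y -> y != par v ->
               (0 < wt v y)%R)
    (Hfar : forall v, is_node par arr v -> v != r -> wt v (par v) != 0%R)
    (* (b) negative far weight propagates to all nodes beyond *)
    (Hneg : forall v u, is_node par arr v -> v != r -> (wt v (par v) < 0)%R ->
              is_node par arr u -> u != v -> v \in anc par u ->
              (wt u (par u) < 0)%R)
    (* (c) all vertex multiplicities positive *)
    (Hmult_arr : forall j, j \in arr -> (0 < mult j)%R)
    (Hmult_v : forall v, v \notin arr -> (0 < vmult par arr wt mult v)%R)
    (Hnu : (2 <= #|arr|)%N) :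
  forall i, i \in arr -> (selflk par arr wt mult i < 0)%R.
Proof.
move=> i Hi.
have Ht := Htree.
have vi := Harr_val i Hi.
have ni := Hmult_arr i Hi.
suff Spos : (0 < \sum_(j in arr | j != i) mult j * lk par arr wt i j)%R.
  by rewrite /selflk mulNr oppr_lt0 divr_gt0 // ltr0z.
have posS : (forall j, j \in arr -> j != i -> 0 < lk par arr wt i j)%R ->
    (0 < \sum_(j in arr | j != i) mult j * lk par arr wt i j)%R.
  move=> H.
  have : (0 < #|arr :\ i|)%N by move: Hnu; rewrite (cardsD1 i) Hi.
  rewrite card_gt0 => /set0Pn [j]; rewrite !inE => /andP[ji ja].
  rewrite (bigD1 j) /=; last by rewrite ja ji.
  apply: ltr_wpDr.
    apply: sumr_ge0 => k /andP[/andP[ka ki] _].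
    by apply: mulr_ge0; apply: ltW; [exact: Hmult_arr | exact: H].
  by apply: mulr_gt0; [exact: Hmult_arr | exact: H].
have anc_cases : forall x, is_node par arr x -> x \in anc par i -> x \in anc par (par i).
  move=> x xn /(anc_step Ht) [E|//]; move: (node_notarr xn Hi); by rewrite E eqxx.
have [ir|ir] := eqVneq i r.
  apply: posS => j ja ji; apply: (lk_pos Ht Hnear Hi ja) => x xn xr.
  by rewrite ir => /(anc_root Ht) E; move: xr; rewrite E eqxx.
set v := par i.
have [vr|vr] := eqVneq v r.
  apply: posS => j ja ji; apply: (lk_pos Ht Hnear Hi ja) => x xn xr.
  by move/(anc_cases _ xn); rewrite -/v vr => /(anc_root Ht) E; move: xr; rewrite E eqxx.
have avi : adj par v i by rewrite adjC (adj_par Ht ir).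
have vv : (1 < valency par v)%N.
  by apply: (val2 (adj_par Ht vr) avi); apply: (pv_ne Ht ir).
have vn : is_node par arr v.
  rewrite /is_node; apply/andP; split; last by rewrite neq_ltn vv orbT.
  by apply/negP => /Harr_val E; move: vv; rewrite E.
have wv0 := Hfar v vn vr.
have [wneg|wpos] := ltP (wt v (par v)) 0%R.
  have vna : v \notin arr by case/andP: vn.
  have := Hmult_v v vna; rewrite /vmult (bigD1 i) //=.
  rewrite (eq_bigr (fun j => wt v i * (mult j * lk par arr wt i j)))%R; last first.
    by move=> j /andP[_ ji]; rewrite (@lk_step _ _ _ arr wt Ht i j Hi ir vi ji vn) mulrCA.
  rewrite -mulr_sumr => H.
  have wi : (0 < wt v i)%R.
    by apply: Hnear => //; rewrite eq_sym; apply: (pv_ne Ht ir).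
  have ln : (mult i * lk par arr wt v i < 0)%R.
    by rewrite pmulr_rlt0 //; apply: (lk_neg Ht Hnear Hi ir vi vn vr wneg).
  rewrite -(pmulr_rgt0 _ wi).
  set a := (mult i * _)%R in H ln; set b := (wt v i * _)%R in H *.
  have -> : b = (a + b + - a)%R by rewrite addrC addKr.
  by apply: addr_gt0 => //; rewrite oppr_gt0.
apply: posS => j ja ji; apply: (lk_pos Ht Hnear Hi ja) => x xn xr.
move/(anc_cases _ xn) => xa.
have [xv|xv] := eqVneq x v; first by rewrite xv lt_neqAle eq_sym wv0.
rewrite lt_neqAle eq_sym (Hfar x xn xr) /=.
case: leP => // xneg.
have vx : v != x by rewrite eq_sym.
by have := Hneg x v xn xr xneg vn vx xa; rewrite ltNge wpos.
Qed.
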